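(* Let $X$ be a locally compact Hausdorff space and consider a commutative square of pointed extensions of $X$ with $X_+\to X''_\ast$, $X_+\to X'_\ast$, $X''_\ast\to X^+$, $X'_\ast\to X^+$. If this square is simultaneously a pullback and a pushout in the category of compactly generated Hausdorff spaces, then the canonical relations $X'_\ast\to(X''_\ast)^\neg$ and $X''_\ast\to(X'_\ast)^\neg$ are the universal relations to the well-pointed replacements; i.e. $(X''_\ast)^\neg=(X'_\ast)^{\neg\neg}$ and $(X'_\ast)^\neg=(X''_\ast)^{\neg\neg}$ via these relations.
   Context: A pointed extension of $X$ is a compactly generated Hausdorff topology on $\ast\amalg X$ extending that of $X$; they form a poset with $X_\ast\le X'_\ast$ (a ''relation'' $X_\ast\to X'_\ast$) iff the identity map is continuous; $X_+$ (disjoint basepoint) is initial and $X^+$ (one-point compactification) is final. The negation $X_\ast^\neg$ is the final pointed extension $X'_\ast$ for which $X_+\to X_\ast\times_{X^+}X'_\ast$ is a homeomorphism. There is a canonical relation $X_\ast\to X_\ast^{\neg\neg}$; $X_\ast$ is well-pointed if it is an equality, and $X_\ast\to X_\ast^{\neg\neg}$ is the well-pointed replacement (left adjoint to the inclusion of well-pointed extensions). *)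

(* Defs.v *)
(* Raw topologies on a type T are represented as
   their set of open sets  O : set (set T); this is needed because pointed
   extensions are several topologies on the same carrier  option X. *)
From mathcomp Require Import all_boot all_order all_algebra.
From mathcomp Require Import all_classical all_reals all_analysis.
Set Implicit Arguments. Unset Strict Implicit. Unset Printing Implicit Defensive.
Local Open Scope classical_set_scope.

Section RawTopology.
Variable T : Type.
Implicit Types (O : set (set T)) (A K : set T).

Definition is_topology O :=
  [/\ O set0, O setT,
      (forall U V, O U -> O V -> O (U `&` V)) &
      (forall (I : Type) (F : I -> set T), (forall i, O (F i)) ->
          O (\bigcup_i F i))].

Definition closedT O A := O (~` A).

Definition compactT O K :=
  forall (I : Type) (F : I -> set T), (forall i, O (F i)) ->
    K `<=` \bigcup_i F i ->
    exists J : set I, finite_set J /\ K `<=` \bigcup_(i in J) F i.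

Definition hausdorffT O :=
  forall x y : T, x <> y -> exists U V, [/\ O U, O V, U x, V y & U `&` V = set0].

Definition kspaceT O :=
  forall A, (forall K, compactT O K ->
               exists C, closedT O C /\ A `&` K = C `&` K) -> closedT O A.

Definition is_cgh O := [/\ is_topology O, hausdorffT O & kspaceT O].
End RawTopology.

Definition continuousT (A B : Type) (OA : set (set A)) (OB : set (set B))
  (f : A -> B) := forall V, OB V -> OA (f @^-1` V).

Section PointedExtensions.
Variable X : topologicalType.

(* a pointed extension of X: a compactly generated Hausdorff topology on
   * ⊔ X = option X (basepoint None) inducing the topology of X on Some X *)
Definition pointed_ext (O : set (set (option X))) :=
  is_cgh O /\ (forall U : set X, open U <-> exists V, O V /\ U = Some @^-1` V).

Definition plus_top : set (set (option X)) :=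
  [set V | open (Some @^-1` V)].

Definition oneptc_top : set (set (option X)) :=
  [set V | open (Some @^-1` V) /\ (V None -> compact (~` (Some @^-1` V)))].

Definition rel_ext (O1 O2 : set (set (option X))) := continuousT O1 O2 id.

(* the square  X_+ -> O1, X_+ -> O2, O1 -> X^+, O2 -> X^+ (all identities)
   is a pullback in CGHaus, i.e. X_+ -> O1 x_{X^+} O2 is a homeomorphism:
   universal property against every compactly generated Hausdorff space Z *)
Definition is_pullback_sq (O1 O2 : set (set (option X))) :=
  forall (Z : Type) (OZ : set (set Z)), is_cgh OZ ->
  forall f : Z -> option X,
    continuousT OZ O1 f -> continuousT OZ O2 f -> continuousT OZ plus_top f.

Definition is_pushout_sq (O1 O2 : set (set (option X))) :=
  forall (Z : Type) (OZ : set (set Z)), is_cgh OZ ->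
  forall g : option X -> Z,
    continuousT O1 OZ g -> continuousT O2 OZ g -> continuousT oneptc_top OZ g.

Definition is_negation (O N : set (set (option X))) :=
  [/\ pointed_ext N, is_pullback_sq O N &
      forall N', pointed_ext N' -> is_pullback_sq O N' -> rel_ext N' N].
End PointedExtensions.

(* Main.v *)
Require Import Defs.
From mathcomp Require Import all_boot all_order all_algebra.
From mathcomp Require Import all_classical all_reals all_analysis.
Local Open Scope classical_set_scope.

Lemma topU2 T (O : set (set T)) U V : is_topology O -> O U -> O V -> O (U `|` V).
Proof.
case=> _ _ _ hU OU OV.
have -> : U `|` V = \bigcup_(b : bool) (if b then U else V).
  apply/seteqP; split=> x.
    by case=> h; [exists true|exists false].
  by case=> -[] _ h; [left|right].
by apply: hU => -[].
Qed.

Lemma top_compl_pt T (O : set (set T)) : is_topology O -> hausdorffT O ->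
  forall p, O (~` [set p]).
Proof.
move=> tO hO p.
have : forall i : {y | y <> p}, exists U, O U /\ U (proj1_sig i) /\ ~ U p.
  move=> [y yp] /=; have [U [V [OU OV Uy Vp UV]]] := hO y p yp.
  exists U; split=> //; split=> // Up.
  by have : (U `&` V) p by []; rewrite UV.
move=> /choice [F HF].
have -> : ~` [set p] = \bigcup_i F i.
  apply/seteqP; split=> x.
    move=> xp; exists (exist _ x xp) => //; by have [_ []] := HF (exist _ x xp).
  case=> i _ Fx xp; have [_ [_ ]] := HF i; by rewrite -xp.
case: tO => _ _ _ hU; apply: hU => i; by have [] := HF i.
Qed.

Section PE.
Variable X : topologicalType.

Lemma some_open {O : set (set (option X))} : pointed_ext O ->
  forall V, ~ V None -> open (Some @^-1` V) -> O V.
Proof.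
move=> [[tO hO kO] eO] V VN oV.
have [W [OW eW]] := (eO _).1 oV.
have -> : V = W `&` ~` [set None].
  apply/seteqP; split=> -[x|] //=.
  - by move=> Vx; split=> //; have : (Some @^-1` V) x by []; rewrite eW.
  - by move=> [Wx _]; have : (Some @^-1` W) x by []; rewrite -eW.
  - by move=> [_ ].
case: (tO) => _ _ hI _; apply: hI => //; exact: top_compl_pt.
Qed.

Lemma open_some {O : set (set (option X))} : pointed_ext O ->
  forall V, O V -> open (Some @^-1` V).
Proof. by move=> [_ eO] V OV; apply/(eO _).2; exists V. Qed.

Lemma sep_compact {O : set (set (option X))} : pointed_ext O ->
  forall C, compact C -> exists E, [/\ O E, E None & forall x, C x -> ~ E (Some x)].
Proof.
move=> eO C cC; apply: contrapT => hn.
have hn' : forall E, O E -> E None -> exists x, C x /\ E (Some x).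
  move=> E OE EN; apply: contrapT => hx; apply: hn; exists E; split=> // x Cx Ex.
  by apply: hx; exists x.
case: (eO) => -[tO hO kO] _.
pose F := filter_from [set E | O E /\ E None] (fun E => C `&` Some @^-1` E).
have FF : Filter F.
  apply: filter_from_filter; first by exists setT; case: tO.
  move=> i j [Oi Ni] [Oj Nj]; exists (i `&` j); first by split=> //; case: tO => _ _ hI _; apply: hI.
  by move=> x [Cx [ix jx]].
have PF : ProperFilter F.
  apply: filter_from_proper => E [OE EN]; have [x [Cx Ex]] := hn' E OE EN.
  by exists x.
have FC : F C by exists setT; [split; case: tO|move=> x []].
have [x [Cx clx]] := cC F PF FC.
have [U [V [OU OV UN Vx UV]]] := hO None (Some x) (fun e => ltac:(discriminate)).
have FU : F (C `&` Some @^-1` U) by exists U.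
have nV : nbhs x (Some @^-1` V).
  apply: open_nbhs_nbhs; split=> //. exact: (open_some eO V OV).
have [y [[_ Uy] Vy]] := clx _ _ FU nV.
by have : (U `&` V) (Some y) by []; rewrite UV.
Qed.
End PE.
Arguments some_open {X O}.
Arguments open_some {X O}.
Arguments sep_compact {X O}.

Definition topD T (OZ : set (set T)) (D : set T) : set (set T) :=
  [set V | exists W, OZ W /\ forall z, ~ D z -> (V z <-> W z)].

Arguments topD {T}.

Lemma topD_sub T (OZ : set (set T)) (D V : set T) : OZ V -> topD OZ D V.
Proof. by move=> OV; exists V. Qed.

Lemma topD_cgh T (OZ : set (set T)) D : is_cgh OZ -> OZ D -> is_cgh (topD OZ D).
Proof.
move=> [[t0 tT tI tU] hZ kZ] OD; split.
- split.
  + by exists set0.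
  + by exists setT.
  + move=> U V [Wa [Oa ha]] [Wb [Ob hb]]; exists (Wa `&` Wb); split; first exact: tI.
    move=> z Dz; split=> -[a b]; split; by [apply/(ha z Dz)|apply/(hb z Dz)].
  + move=> I F hF; have /choice [W hW] : forall i, exists W, OZ W /\ forall z, ~ D z -> (F i z <-> W z).
      by move=> i; exact: hF.
    exists (\bigcup_i W i); split; first by apply: tU => i; case: (hW i).
    move=> z Dz; split=> -[i _ h]; exists i => //; by apply/(proj2 (hW i) z Dz).
- move=> x y xy; have [U [V [OU OV Ux Vy UV]]] := hZ x y xy.
  by exists U, V; split=> //; exact: topD_sub.
- move=> A hA.
  have kA : Defs.closedT OZ (A `&` ~` D).
    apply: kZ => K cK.
    have cK' : compactT (topD OZ D) (K `&` ~` D).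
      move=> I F hF cov.
      have /choice [W hW] : forall i, exists W, OZ W /\ forall z, ~ D z -> (F i z <-> W z).
        by move=> i; exact: hF.
      pose G := fun o : option I => if o is Some i then W i else D.
      have [J [fJ cJ]] : exists J : set (option I), finite_set J /\ K `<=` \bigcup_(i in J) G i.
        apply: cK.
          by case=> [i|] //=; case: (hW i).
        move=> z Kz; have [Dz|nDz] := pselect (D z); first by exists None.
        have [i _ Fiz] := cov z (conj Kz nDz); exists (Some i) => //=.
        by apply/(proj2 (hW i) z nDz).
      exists (Some @^-1` J); split.
        by apply: finite_preimage => // a b _ _ [].
      move=> z [Kz nDz]; have [[i|] Ji Gz] := cJ z Kz; last by [].
      by exists i => //; apply/(proj2 (hW i) z nDz).
    have [C [[W [OW hW]] eC]] := hA _ cK'.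
    exists (~` W `&` ~` D); split.
      rewrite /Defs.closedT (_ : ~` (~` W `&` ~` D) = W `|` D); first exact: topU2.
      apply/seteqP; split=> z /=.
        by move=> h; apply: contrapT => hn; apply: h; split=> hh; apply: hn; [left|right].
      by case=> h [? ?].
    apply/seteqP; split=> z /=.
      move=> [[Az nDz] Kz]; split=> //; split=> //.
      have : (A `&` (K `&` ~` D)) z by [].
      rewrite eC => -[Cz _] Wz.
      by have := (proj2 (hW z nDz) Wz).
    move=> [[nWz nDz] Kz]; split=> //; split=> //.
    have : (C `&` (K `&` ~` D)) z.
      split=> //; apply: contrapT => nC; apply: nWz; exact/(hW z nDz).
    by rewrite -eC => -[].
  exists (~` (A `&` ~` D)); split; first exact: kA.
  move=> z nDz; split=> h.
    by move=> [].
  by move=> Az; apply: h.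
Qed.

Section Main.
Variable X : topologicalType.
Hypothesis hX : hausdorff_space X.
Hypothesis lcX : locally_compact [set: X].

Lemma img_open (U : set X) : open U -> oneptc_top (Some @` U).
Proof.
move=> oU; split; last by case.
rewrite (_ : Some @^-1` (Some @` U) = U) //; apply/seteqP; split=> x /=.
  by case=> y Uy [<-].
by move=> Ux; exists x.
Qed.

Lemma sepN (x : X) : exists U V, [/\ oneptc_top U, oneptc_top V, U None, V (Some x) & U `&` V = set0].
Proof.
have [K nK [cK clK]] := lcX x I.
have nK' : nbhs x K by move: nK; rewrite withinET.
move: nK'; rewrite nbhsE => -[B [oB Bx] BK].
exists (fun o => match o with None => True | Some y => ~ K y end), (Some @` B).
split=> //.
- split.
    rewrite (_ : Some @^-1` _ = ~` K) ?openC //.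
  by move=> _; rewrite (_ : ~` (Some @^-1` _) = K) //; apply/seteqP; split=> y /=;
    [move=> h; exact: contrapT | move=> Ky; apply].
- exact: img_open.
- apply/seteqP; split=> // -[y|] [] //=.
    by move=> Ky [z Bz [ez]]; apply: Ky; rewrite -ez; apply: BK.
  by move=> _ [z _].
Qed.

Lemma oneptc_haus : hausdorffT (@oneptc_top X).
Proof.
move=> [a|] [b|] ab.
- have ab' : a != b by apply/eqP => e; apply: ab; rewrite e.
  have := hX; rewrite open_hausdorff => /(_ a b ab') [[A B] /= [aA bB] [oA oB /eqP AB]].
  exists (Some @` A), (Some @` B); split.
  + exact: img_open.
  + exact: img_open.
  + by exists a => //; rewrite -in_setE.
  + by exists b => //; rewrite -in_setE.
  + apply/seteqP; split=> // o [[y Ay <-] [z Bz ez]]; case: ez => ez.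
    have : (A `&` B) y by split=> //; rewrite -ez.
    by rewrite AB.
- have [U [V [oU oV UN Va UV]]] := sepN a.
  by exists V, U; split=> //; rewrite setIC.
- have [U [V [oU oV UN Vb UV]]] := sepN b.
  by exists U, V.
- by case: ab.
Qed.

Lemma inter_cgh (O2 O1 : set (set (option X))) : pointed_ext O2 -> pointed_ext O1 ->
  rel_ext O2 (@oneptc_top X) -> rel_ext O1 (@oneptc_top X) ->
  is_cgh [set V | O2 V /\ O1 V].
Proof.
move=> [[[a0 aT aI aU] h2 k2] _] [[[b0 bT bI bU] h1 k1] _] s2 s1; split.
- split=> //.
  + by move=> U V [? ?] [? ?]; split; [apply: aI|apply: bI].
  + by move=> I F hF; split; [apply: aU => i; case: (hF i)|apply: bU => i; case: (hF i)].
- move=> x y xy; have [U [V [oU oV Ux Vy UV]]] := oneptc_haus x y xy.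
  exists U, V; split=> //; split; [exact: s2|exact: s1|exact: s2|exact: s1].
- move=> A hk; split.
  + apply: k2 => K cK.
    have cK' : compactT [set V | O2 V /\ O1 V] K.
      by move=> I F hF; apply: cK => i; case: (hF i).
    by have [C [[? ?] eC]] := hk K cK'; exists C.
  + apply: k1 => K cK.
    have cK' : compactT [set V | O2 V /\ O1 V] K.
      by move=> I F hF; apply: cK => i; case: (hF i).
    by have [C [[? ?] eC]] := hk K cK'; exists C.
Qed.

Lemma po_int (O2 O1 : set (set (option X))) : pointed_ext O2 -> pointed_ext O1 ->
  rel_ext O2 (@oneptc_top X) -> rel_ext O1 (@oneptc_top X) ->
  is_pushout_sq O2 O1 -> forall V, O2 V -> O1 V -> oneptc_top V.
Proof.
move=> e2 e1 s2 s1 po V a b.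
have := po _ _ (@inter_cgh O2 O1 e2 e1 s2 s1) id (fun W h => proj1 h) (fun W h => proj2 h).
by move=> /(_ V (conj a b)).
Qed.


Lemma pb_sym {A B : set (set (option X))} : is_pullback_sq A B -> is_pullback_sq B A.
Proof. by move=> h Z OZ hZ f fB fA; exact: h. Qed.

Lemma po_sym {A B : set (set (option X))} : is_pushout_sq A B -> is_pushout_sq B A.
Proof. by move=> h Z OZ hZ f fB fA; exact: h. Qed.

Lemma dir (O2 O1 N2 N1 : set (set (option X))) : pointed_ext O2 -> pointed_ext O1 ->
  rel_ext O2 (@oneptc_top X) -> rel_ext O1 (@oneptc_top X) ->
  is_pullback_sq O2 O1 -> is_pushout_sq O2 O1 ->
  is_negation O2 N2 -> is_negation O1 N1 -> is_negation N1 N2.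
Proof.
move=> e2 e1 s2 s1 pb po [en2 pn2 mn2] [en1 pn1 mn1].
have r21 : rel_ext O2 N1 := mn1 O2 e2 (pb_sym pb).
split=> //; last first.
  move=> N' e' pb'; apply: mn2 => // Z OZ hZ f fO2 fN'.
  apply: pb' => // V N1V; apply: fO2; exact: r21.
move=> Z OZ hZ f f1 f2.
have tOZ := hZ; case: tOZ => -[_ _ tI tU] _ _.
apply: pn2 => // V O2V.
have pre : forall W : set (option X),
    Some @^-1` (W `&` ~` [set None]) = Some @^-1` W.
  by move=> W; apply/seteqP; split=> x /=; [case|move=> h; split].
have [VN|VN] := pselect (V None); last first.
  by apply: f1; apply: (some_open en1) => //; exact: (open_some e2).
pose D := f @^-1` (V `&` ~` [set None]).
have OD : OZ D.
  apply: f1; apply: (some_open en1); first by move=> [_ hh]; apply: hh.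
  by rewrite pre; exact: (open_some e2).
have hZD := @topD_cgh _ _ _ hZ OD.
have fD1 : continuousT (topD OZ D) N1 f by move=> W NW; apply: topD_sub; exact: f1.
have fDO : continuousT (topD OZ D) O1 f.
  move=> H O1H.
  have [HN|HN] := pselect (H None); last first.
    by apply: fD1; apply: (some_open en1) => //; exact: (open_some e1).
  have O1HV : O1 (H `|` V).
    rewrite (_ : H `|` V = H `|` (V `&` ~` [set None])).
      apply: topU2 => //; first by case: e1 => -[].
      apply: (some_open e1); first by move=> [_ hh]; apply: hh.
      by rewrite pre; exact: (open_some e2).
    apply/seteqP; split=> -[x|] /=; try tauto.
    by case=> h; [left|right; split].
  have O2HV : O2 (H `|` V).
    rewrite (_ : H `|` V = (H `&` ~` [set None]) `|` V).
      apply: topU2 => //; first by case: e2 => -[].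
      apply: (some_open e2); first by move=> [_ hh]; apply: hh.
      by rewrite pre; exact: (open_some e1).
    apply/seteqP; split=> -[x|] /=; try tauto.
    by case=> h; [left; split|right].
  have [_ cC] := @po_int O2 O1 e2 e1 s2 s1 po _ O2HV O1HV.
  have [E [NE EN EC]] := sep_compact en1 _ (cC (or_introl HN)).
  exists (f @^-1` ((H `&` ~` [set None]) `|` E)); split.
    apply: f1; apply: topU2 => //; first by case: en1 => -[].
    apply: (some_open en1); first by move=> [_ hh]; apply: hh.
    by rewrite pre; exact: (open_some e1).
  move=> z nDz; rewrite /preimage /=; case e : (f z) => [x|].
    split; first by move=> Hx; left; split.
    case; first by case.
    move=> Ex; have : ~ (~` (Some @^-1` (H `|` V))) x by move=> h; exact: EC h Ex.
    move=> /contrapT [//|Vx].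
    by exfalso; apply: nDz; rewrite /D /preimage /= e.
  by split=> // _; right.
have [W [OW hW]] : topD OZ D (f @^-1` [set None]).
  apply: (pn1 Z _ hZD f fDO fD1).
  rewrite /plus_top /=.
  have -> : Some @^-1` [set None] = (set0 : set X) by apply/seteqP; split=> x.
  exact: open0.
rewrite (_ : f @^-1` V = D `|` W); first by apply: topU2 => //; case: hZ.
apply/seteqP; split=> z /=.
  case e : (f z) => [x|] Vz.
    by left; rewrite /D /preimage /= e.
  right; apply/(hW z); last by [].
  by rewrite /D /preimage /= e => -[].
case=> [[]//|Wz].
have [Dz|nDz] := pselect (D z); first by case: Dz.
by have := (proj2 (hW z nDz) Wz) => /= ->.
Qed.

End Main.


Theorem mainTheorem11 (X : topologicalType)
  (hX : hausdorff_space X) (lcX : locally_compact [set: X])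
  (O2 O1 : set (set (option X))) (* O2 = X''_*, O1 = X'_* *)
  (e2 : pointed_ext O2) (e1 : pointed_ext O1)
  (r2 : rel_ext (@plus_top X) O2) (r1 : rel_ext (@plus_top X) O1)
  (s2 : rel_ext O2 (@oneptc_top X)) (s1 : rel_ext O1 (@oneptc_top X))
  (pb : is_pullback_sq O2 O1) (po : is_pushout_sq O2 O1) :
  forall N2 N1 : set (set (option X)),
    is_negation O2 N2 -> is_negation O1 N1 ->
    is_negation N1 N2 /\ is_negation N2 N1.
Proof.
move=> N2 N1 n2 n1; split.
  exact: (@dir X hX lcX O2 O1 N2 N1 e2 e1 s2 s1 pb po n2 n1).
exact: (@dir X hX lcX O1 O2 N1 N2 e1 e2 s1 s2 (@pb_sym X _ _ pb) (@po_sym X _ _ po) n1 n2).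
Qed.
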